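(* Let $\beta>1$ and $t\in[0,1)$. Then the following are equivalent: (i) $t\in K(t)$; (ii) $t\in E_\beta$; (iii) $t\in\mathcal U$.
   Context: Let $T_\beta\colon[0,1)\to[0,1)$, $T_\beta(x)=\beta x-\lfloor\beta x\rfloor$. For $0<t<1$ let $K(t)=\{x\in[0,1)\colon T_\beta^k(x)\notin(0,t)\text{ for all }k\ge0\}$; set $K(0)=[0,1)$ and $K(1)=\{0\}$. $E_\beta=\{t\in[0,1)\colon K(t')\neq K(t)\text{ for every }t'>t\}$. A parameter $t\in[0,1]$ is a bifurcation parameter if $t\in\{0,1\}$, or $0<t<1$ and for every $\delta>0$ there is $t'\in(t-\delta,t+\delta)$ with $K(t')\neq K(t)$. $\mathcal U$ denotes the set of bifurcation parameters in $[0,1)$. *)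

(* Defs.v *)
From Stdlib Require Import Reals.
Open Scope R_scope.

Definition Rfloor (r : R) : R := IZR (Int_part r).

Definition Tb (beta x : R) : R := beta * x - Rfloor (beta * x).

Definition Tbk (beta : R) (k : nat) (x : R) : R := Nat.iter k (Tb beta) x.

Definition K (beta t x : R) : Prop :=
  if Req_EM_T t 0 then 0 <= x < 1
  else if Req_EM_T t 1 then x = 0
  else 0 <= x < 1 /\ forall k : nat, ~ (0 < Tbk beta k x < t).

Definition Kneq (beta t t' : R) : Prop := ~ (forall x, K beta t x <-> K beta t' x).

Definition E (beta t : R) : Prop :=
  0 <= t < 1 /\ forall t', t < t' <= 1 -> Kneq beta t' t.

Definition bifurcation (beta t : R) : Prop :=
  0 <= t <= 1 /\
  (t = 0 \/ t = 1 \/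
   (0 < t < 1 /\ forall delta, 0 < delta ->
      exists t', 0 <= t' <= 1 /\ t - delta < t' < t + delta /\ Kneq beta t' t)).

Definition U (beta t : R) : Prop := 0 <= t < 1 /\ bifurcation beta t.

(* Main.v *)
Require Import Defs.
From Stdlib Require Import Reals.
From Stdlib Require Import Lra Lia Psatz Classical.
Open Scope R_scope.

Lemma Rfloor_eq (z : Z) (r : R) : IZR z <= r < IZR z + 1 -> Rfloor r = IZR z.
Proof.
  intros [H1 H2]. unfold Rfloor. destruct (base_Int_part r) as [H3 H4].
  f_equal.
  assert (A : IZR (Int_part r - z) < 1) by (rewrite minus_IZR; lra).
  assert (B : IZR (Int_part r - z) > -1) by (rewrite minus_IZR; lra).
  apply lt_IZR in A. change (-1) with (IZR (-1)) in B. apply lt_IZR in B. lia.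
Qed.

Lemma Tb0 beta : Tb beta 0 = 0.
Proof.
  unfold Tb. rewrite Rmult_0_r. rewrite (Rfloor_eq 0 0); [lra|].
  simpl; lra.
Qed.

Lemma Tbk_S beta n x : Tbk beta (S n) x = Tb beta (Tbk beta n x).
Proof. reflexivity. Qed.

Lemma lin beta : 0 < beta -> forall n x, Tbk beta n x <> 0 ->
  exists d, 0 < d /\ forall s, Rabs (s - x) < d ->
    Tbk beta n s = Tbk beta n x + beta ^ n * (s - x).
Proof.
  intros Hb n. induction n as [|n IH]; intros x Hx.
  - exists 1. split; [lra|]. intros s _. simpl. unfold Tbk. simpl. lra.
  - rewrite Tbk_S in Hx.
    assert (Hy : Tbk beta n x <> 0).
    { intro E. rewrite E, Tb0 in Hx. apply Hx; reflexivity. }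
    destruct (IH x Hy) as [d [Hd Hs]].
    set (y := Tbk beta n x) in *.
    destruct (base_Int_part (beta * y)) as [H1 H2].
    set (m := Int_part (beta * y)) in *.
    unfold Tb, Rfloor in Hx. fold m in Hx.
    set (e1 := beta * y - IZR m).
    set (e2 := IZR m + 1 - beta * y).
    assert (He1 : 0 < e1) by (unfold e1; lra).
    assert (He2 : 0 < e2) by (unfold e2; lra).
    set (b := beta ^ S n).
    assert (Hbp : 0 < b) by (unfold b; apply pow_lt; lra).
    set (d2 := Rmin e1 e2 / b).
    assert (Hbd : b * d2 = Rmin e1 e2) by (unfold d2; field; lra).
    assert (Hd2 : 0 < d2).
    { unfold d2. apply Rdiv_lt_0_compat; [|lra]. apply Rmin_pos; lra. }
    exists (Rmin d d2). split; [apply Rmin_pos; lra|].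
    intros s Hsx.
    assert (Hs1 : Rabs (s - x) < d) by (eapply Rlt_le_trans; [exact Hsx| apply Rmin_l]).
    assert (Hs2 : Rabs (s - x) < d2) by (eapply Rlt_le_trans; [exact Hsx| apply Rmin_r]).
    rewrite !Tbk_S. rewrite (Hs s Hs1). fold y.
    apply Rabs_def2 in Hs2. destruct Hs2 as [Ha Hc].
    assert (P1 : b * (s - x) < b * d2) by nra.
    assert (P2 : - (b * d2) < b * (s - x)) by nra.
    assert (M1 := Rmin_l e1 e2). assert (M2 := Rmin_r e1 e2).
    assert (Hbb : b = beta * beta ^ n) by reflexivity.
    unfold Tb.
    rewrite (Rfloor_eq m (beta * (y + beta ^ n * (s - x)))).
    + unfold Rfloor; fold m; rewrite Hbb; ring.
    + unfold e1, e2 in *. split; nra.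
Qed.

Lemma K_mid beta t x : 0 < t < 1 ->
  (K beta t x <-> 0 <= x < 1 /\ forall k : nat, ~ (0 < Tbk beta k x < t)).
Proof.
  intros Ht. unfold K. destruct (Req_EM_T t 0); [lra|].
  destruct (Req_EM_T t 1); [lra|]. tauto.
Qed.

Lemma Tbk_add beta k j x : Tbk beta k (Tbk beta j x) = Tbk beta (k + j) x.
Proof. unfold Tbk. rewrite Nat.iter_add. reflexivity. Qed.

Theorem mainTheorem3 (beta t : R) (Hbeta : 1 < beta) (Ht : 0 <= t < 1) :
  (K beta t t <-> E beta t) /\ (E beta t <-> U beta t).
Proof.
  destruct (Req_EM_T t 0) as [Ht0 | Ht0].
  - subst t.
    assert (HK : K beta 0 0).
    { unfold K. destruct (Req_EM_T 0 0); [lra|congruence]. }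
    assert (HE : E beta 0).
    { split; [lra|]. intros t' Ht' Heq.
      assert (K0 : K beta 0 (t'/2)).
      { unfold K. destruct (Req_EM_T 0 0); [lra|congruence]. }
      apply Heq in K0. unfold K in K0.
      destruct (Req_EM_T t' 0); [lra|].
      destruct (Req_EM_T t' 1); [lra|].
      destruct K0 as [_ K0]. apply (K0 0%nat). unfold Tbk; simpl. lra. }
    assert (HU : U beta 0).
    { split; [lra|]. split; [lra|]. left; reflexivity. }
    tauto.
  - assert (Htt : 0 < t < 1) by lra.
    assert (A : K beta t t -> E beta t).
    { intros HK. split; [lra|]. intros t' Ht' Heq.
      apply Heq in HK. unfold K in HK.
      destruct (Req_EM_T t' 0); [lra|].
      destruct (Req_EM_T t' 1); [lra|].
      destruct HK as [_ HK]. apply (HK 0%nat). unfold Tbk; simpl. lra. }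
    assert (B : E beta t -> U beta t).
    { intros [_ HE]. split; [lra|]. split; [lra|]. right; right. split; [lra|].
      intros delta Hd. exists (Rmin (t + delta/2) 1).
      assert (M1 := Rmin_l (t + delta/2) 1). assert (M2 := Rmin_r (t + delta/2) 1).
      assert (M3 : t < Rmin (t + delta/2) 1) by (apply Rmin_glb_lt; lra).
      split; [lra|]. split; [lra|]. apply HE. lra. }
    assert (C : U beta t -> K beta t t).
    { intros [_ [_ HU]].
      destruct HU as [H0 | [H1 | [_ HU]]]; [lra|lra|].
      apply NNPP. intros HnK.
      assert (Hex : exists k, 0 < Tbk beta k t < t).
      { apply not_all_not_ex. intros Hall. apply HnK. apply K_mid; [lra|].
        split; [lra|]. exact Hall. }
      destruct Hex as [k Hk].
      set (y := Tbk beta k t) in *.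
      assert (Hy0 : y <> 0) by lra.
      destruct (lin beta ltac:(lra) k t Hy0) as [d [Hd Hlin]].
      fold y in Hlin.
      set (c := beta ^ k).
      assert (Hc : 0 < c) by (unfold c; apply pow_lt; lra).
      set (r1 := (t - y) / (c + 1)).
      set (r2 := y / (c + 1)).
      assert (Hr1 : r1 * (c + 1) = t - y) by (unfold r1; field; lra).
      assert (Hr2 : r2 * (c + 1) = y) by (unfold r2; field; lra).
      assert (Hr1p : 0 < r1) by (unfold r1; apply Rdiv_lt_0_compat; lra).
      assert (Hr2p : 0 < r2) by (unfold r2; apply Rdiv_lt_0_compat; lra).
      set (delta := Rmin d (Rmin t (Rmin (1 - t) (Rmin r1 r2)))).
      assert (D1 : delta <= d) by apply Rmin_l.
      assert (D2 : delta <= t) by (eapply Rle_trans; [apply Rmin_r| apply Rmin_l]).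
      assert (D3 : delta <= 1 - t) by
        (eapply Rle_trans; [apply Rmin_r|]; eapply Rle_trans; [apply Rmin_r| apply Rmin_l]).
      assert (D4 : delta <= r1) by
        (eapply Rle_trans; [apply Rmin_r|]; eapply Rle_trans; [apply Rmin_r|];
         eapply Rle_trans; [apply Rmin_r| apply Rmin_l]).
      assert (D5 : delta <= r2) by
        (eapply Rle_trans; [apply Rmin_r|]; eapply Rle_trans; [apply Rmin_r|];
         eapply Rle_trans; [apply Rmin_r| apply Rmin_r]).
      assert (Dp : 0 < delta).
      { unfold delta. repeat apply Rmin_pos; lra. }
      assert (Key : forall s, t - delta < s < t + delta ->
                 0 < Tbk beta k s < t - delta).
      { intros s Hs. rewrite (Hlin s).
        - fold c. split; nra.
        - apply Rabs_def1; lra. }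
      assert (Mono : forall t1 t2 x, t - delta < t1 -> t1 <= t2 -> t2 < t + delta ->
                 (forall j, ~ (0 < Tbk beta j x < t1)) ->
                 (forall j, ~ (0 < Tbk beta j x < t2))).
      { intros t1 t2 x H1 H2 H3 Hall j Hj.
        destruct (Rlt_le_dec (Tbk beta j x) t1) as [Hl | Hl].
        - apply (Hall j). lra.
        - assert (Hk2 := Key (Tbk beta j x) ltac:(lra)).
          rewrite Tbk_add in Hk2. apply (Hall (k + j)%nat). lra. }
      destruct (HU delta Dp) as [t' [Ht'01 [Ht'd Hneq]]].
      apply Hneq. intros x.
      rewrite (K_mid beta t' x) by lra. rewrite (K_mid beta t x) by lra.
      destruct (Rle_dec t' t) as [Hle | Hle].
      + split; intros [Hx Hall]; split; auto.
        * apply (Mono t' t x); auto; lra.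
        * intros j Hj. apply (Hall j). lra.
      + split; intros [Hx Hall]; split; auto.
        * intros j Hj. apply (Hall j). lra.
        * apply (Mono t t' x); auto; lra. }
    tauto.
Qed.
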